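(* For every $n\ge 0$, $L(C_n)=B_n$, where the Bernoulli numbers are defined by $\sum_{n\ge0}B_n\frac{x^n}{n!}=\frac{x}{e^x-1}$. Equivalently, with $L_\sigma:=L\circ A_\sigma^{-1}$, $L_\sigma(C_n)=B_n/n!$.
   Context: Let $k$ be a field of characteristic $0$. Rooted trees are finite and non-planar; $\bullet$ is the one-vertex tree. $\mathcal H$ is the free commutative $k$-algebra generated by isomorphism classes of rooted trees with at least one edge, with unit identified with $\bullet$. A subforest of a rooted tree $t$ is either $\bullet$ or a nonempty set of pairwise vertex-disjoint subtrees each with at least one edge, identified with the product of its components; $t/s$ is the tree obtained by contracting each component of $s$ to a vertex. $\mathcal H$ is a Hopf algebra with multiplicative coproduct $\Delta(t)=\sum_s s\otimes t/s$ over subforests (as subsets), antipode $S$, convolution $f\star g=(f\otimes g)\circ\Delta$. The tree factorial: $\bullet!=1$, $B_+(t_1\cdots t_n)!=v(B_+(t_1\cdots t_n))\prod_jt_j!$, with $B_+$ grafting on a new root and $v$ the number of vertices. $E$ is the character of $\mathcal H$ with $E(t)=1/t!$, and $L=E\circ S$ its $\star$-inverse. $C_n$ is the corolla with $n$ edges ($C_0=\bullet$). $A_\sigma(s)=\sigma(s)s$ for forests $s=t_1\cdots t_m$, $\sigma(s)=\prod|\mathrm{Aut}(t_j)|$. *)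

(* Defs.v *)
From HB Require Import structures.
From mathcomp Require Import all_boot all_order all_algebra all_fingroup.
Set Implicit Arguments. Unset Strict Implicit. Unset Printing Implicit Defensive.
Import Order.TTheory GRing.Theory Num.Theory.
Local Open Scope ring_scope.

(* A rooted tree with n+1 vertices 0..n (root 0) is encoded by its parent
   list p = [:: par 1; ...; par n] with par v < v.  Isomorphism classes are
   not quotiented: every function below is isomorphism-invariant. *)
Definition tree := seq nat.

Definition par (p : tree) (v : nat) : nat :=
  if v is v'.+1 then nth 0%N p v' else 0%N.

(* A subforest of t is encoded by a set of edges m : bitseq of size |t|
   (edge v = (par v, v) for v > 0); the components of the forest are the
   connected components of the edge set; the empty set is the trivial
   subforest "bullet". *)
Definition in_edges (m : bitseq) (v : nat) : bool := (0 < v)%N && nth false m v.-1.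

Fixpoint all_masks (n : nat) : seq bitseq :=
  if n is n'.+1 then [seq b :: m | b <- [:: false; true], m <- all_masks n']
  else [:: [::]].

(* top vertex of the component (of the contracted tree) containing v *)
Fixpoint rep_f (p : tree) (m : bitseq) (k v : nat) : nat :=
  if k is k'.+1 then (if in_edges m v then rep_f p m k' (par p v) else v) else v.
Definition rep p m v := rep_f p m v v.

(* vertices of t/s *)
Definition kept (p : tree) (m : bitseq) : seq nat :=
  [seq v <- iota 0 (size p).+1 | ~~ in_edges m v].

Definition quot (p : tree) (m : bitseq) : tree :=
  let K := kept p m in [seq index (rep p m (par p v)) K | v <- behead K].

(* the component of s with top vertex r (the one-vertex tree if none) *)
Definition forest_comp (p : tree) (m : bitseq) (r : nat) : tree :=
  let C := [seq v <- iota 0 (size p).+1 | (v == r) || (in_edges m v && (rep p m v == r))] in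
  [seq index (par p v) C | v <- behead C].

(* u is a descendant of v (or u = v) *)
Fixpoint anc_f (p : tree) (k v u : nat) : bool :=
  (u == v) || (if k is k'.+1 then (0 < u)%N && anc_f p k' v (par p u) else false).
Definition desc p v u := anc_f p u v u.

Definition subsize (p : tree) (v : nat) : nat :=
  count (desc p v) (iota 0 (size p).+1).

(* tree factorial: product over vertices of subtree sizes (the unfolding of
   bullet! = 1, B_+(t_1...t_n)! = v(B_+(...)) prod t_j!) *)
Definition tfact (p : tree) : nat := \prod_(v <- iota 0 (size p).+1) subsize p v.

Section Char.
Variable F : fieldType.

Definition Echar (p : tree) : F := (tfact p)%:R^-1.

(* L = E o S, computed as the convolution inverse of the character E:
   (L * E)(t) = sum_s L(s) E(t/s) = eps(t) = 0 for t with an edge,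
   with L multiplicative on forests and L(bullet) = 1. *)
Fixpoint Lf (k : nat) (p : tree) : F :=
  if k is k'.+1 then
    (if size p == 0%N then 1 else
     - \sum_(m <- all_masks (size p) | m != nseq (size p) true)
         (\prod_(r <- kept p m) Lf k' (forest_comp p m r)) * Echar (quot p m))
  else 1.
Definition Lchar (p : tree) : F := Lf (size p) p.

Definition autcard (p : tree) : nat :=
  #|[pred s : {perm 'I_(size p).+1} | (s ord0 == ord0) &&
     [forall v : 'I_(size p).+1, (0 < val v)%N ==>
        (val (s (inord (par p v))) == par p (val (s v)))]]|.

(* L_sigma = L o A_sigma^{-1}; on a tree t, A_sigma^{-1} t = t / sigma(t) *)
Definition Lsigma (p : tree) : F := Lchar p / (autcard p)%:R.

(* Bernoulli numbers: coefficients of x/(e^x-1) = sum B_n x^n/n!, i.e. the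
   coefficientwise identity (sum B_k x^k/k!)(sum x^j/(j+1)!) = 1:
   B_0 = 1 and sum_{k<=N} B_k/(k! (N-k+1)!) = 0 for N >= 1. *)
Fixpoint bseq (n : nat) : seq F :=
  if n is n'.+1 then
    let s := bseq n' in
    rcons s (- \sum_(k < n) s`_k * (n`!%:R / (k`!%:R * ((n - k).+1)`!%:R)))
  else [:: 1].
Definition bernoulli (n : nat) : F := (bseq n)`_n.

End Char.

Definition corolla (n : nat) : tree := nseq n 0%N.

(* Main.v *)
Require Import Defs.
From HB Require Import structures.
From mathcomp Require Import all_boot all_order all_algebra all_fingroup.
Import GRing.Theory.

Lemma par_cor n v : par (corolla n) v = 0.
Proof. case: v => //= v; rewrite nth_nseq; by case: ifP. Qed.


Lemma rep_cor n m v : rep (corolla n) m v = if in_edges m v then 0 else v.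
Proof.
rewrite /rep; case: v => [|v] //; rewrite [rep_f _ _ _ _]/=.
by rewrite nth_nseq if_same; case: ifP => //; case: v.
Qed.

Lemma kept_cor n m : kept (corolla n) m = 0 :: [seq v <- iota 1 n | ~~ in_edges m v].
Proof. by rewrite /kept size_nseq. Qed.

Lemma map_constE (T : Type) (s : seq T) (c : nat) : [seq c | _ <- s] = nseq (size s) c.
Proof. by elim: s => //= x s ->. Qed.

Definition cnt m n := count (in_edges m) (iota 1 n).

Lemma fc_cor0 n m : forest_comp (corolla n) m 0 = corolla (cnt m n).
Proof.
rewrite /forest_comp size_nseq /= /corolla.
set C := filter _ (iota 1 n).
have -> : [seq index (par (nseq n 0) v) (0 :: C) | v <- C] = [seq 0 | _ <- C].
  by apply: eq_map => v; rewrite (par_cor n).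
rewrite map_constE size_filter /cnt; congr nseq; apply: eq_in_count => v.
rewrite mem_iota => /andP[v1 _].
rewrite (_ : (v == 0) = false); last by case: v v1.
by case E: (in_edges m v) => //=; rewrite (rep_cor n) E.
Qed.

Lemma fc_corr n m r : r \in kept (corolla n) m -> r != 0 -> forest_comp (corolla n) m r = [::].
Proof.
move=> rK r0; apply/nilP; rewrite /nilp /forest_comp size_map size_behead size_filter size_nseq.
have rn : r < n.+1.
  move: rK; rewrite kept_cor inE (negbTE r0) /= mem_filter mem_iota; case/andP=> _ /andP[_].
  by rewrite add1n.
have rE : ~~ in_edges m r.
  move: rK; rewrite kept_cor inE (negbTE r0) /= mem_filter; by case/andP.
rewrite (@eq_count _ _ (pred1 r)).
  by rewrite count_uniq_mem ?iota_uniq // mem_iota add0n rn.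
move=> v; rewrite rep_cor; case: (v =P r) => [->|vr]; first by rewrite orTb [RHS]/= eqxx.
rewrite orFb [RHS]/= (introF eqP vr); case E: (in_edges m v) => //=.
by rewrite eq_sym (negbTE r0).
Qed.

Lemma quot_cor n m : quot (corolla n) m = corolla (n - cnt m n).
Proof.
rewrite /quot kept_cor /= /corolla.
set C := filter _ (iota 1 n).
have -> : [seq index (rep (nseq n 0) m (par (nseq n 0) v)) (0 :: C) | v <- C] = [seq 0 | _ <- C].
  by apply: eq_map => v; rewrite (par_cor n) (rep_cor n); case: in_edges; rewrite /= ?eqxx.
rewrite map_constE size_filter; congr nseq.
by have := count_predC (in_edges m) (iota 1 n); rewrite size_iota /cnt => {2}<-; rewrite addKn.
Qed.

Lemma tfact_cor j : tfact (corolla j) = j.+1.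
Proof.
rewrite /tfact size_nseq /= big_cons.
have -> : subsize (corolla j) 0 = j.+1.
  rewrite /subsize size_nseq -[RHS](size_iota 0 j.+1) -count_predT.
  apply: eq_count => u; rewrite /desc; case: u => //= u.
  by rewrite nth_nseq if_same; case: u.
rewrite big_seq big1 ?muln1 // => v; rewrite mem_iota => /andP[v1 vj].
rewrite /subsize size_nseq (@eq_count _ _ (pred1 v)).
  by rewrite count_uniq_mem ?iota_uniq // mem_iota add0n -add1n vj.
have a0 k : anc_f (corolla j) k v 0 = false.
  by case: k => [|k]; rewrite /= ?andbF orbF; case: v v1 vj.
move=> u; rewrite /desc /pred1; case: u => [|u]; first by rewrite [anc_f _ _ _ _]/= orbF.
by rewrite [anc_f _ _ _ _]/= nth_nseq if_same a0 orbF.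
Qed.
Local Open Scope ring_scope.
Lemma cnt_cons b m : cnt (b :: m) (size m).+1 = (b + cnt m (size m))%N.
Proof.
rewrite /cnt /= (iotaDl 1 1) count_map; congr addn.
apply: eq_in_count => v; rewrite mem_iota => /andP[v1 _] /=.
by case: v v1.
Qed.

Lemma cnt_id m : cnt m (size m) = count id m.
Proof. by elim: m => [|b m IH] //=; rewrite cnt_cons IH. Qed.

Lemma size_masks n m : m \in all_masks n -> size m = n.
Proof.
elim: n m => [|n IH] m /=; first by rewrite inE => /eqP ->.
rewrite cats0 mem_cat => /orP[] /mapP[m' /IH <- ->] //.
Qed.

Lemma sum_masks (F : nzRingType) n (G : nat -> F) :
  \sum_(m <- all_masks n) G (count id m) = \sum_(k < n.+1) 'C(n, k)%:R * G k.
Proof.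
elim: n G => [|n IH] G /=; first by rewrite big_seq1 big_ord_recl big_ord0 /= addr0 mul1r.
rewrite cats0 big_cat !big_map /=.
rewrite (IH G) (eq_bigr (fun m => G (1 + count id m)%N)) // (IH (fun k => G (1 + k)%N)).
rewrite [in RHS]big_ord_recl /= bin0.
under [in RHS]eq_bigr do rewrite binS natrD mulrDl.
rewrite big_split /= addrA; congr (_ + _).
rewrite [in RHS]big_ord_recr /= bin_small // mul0r addr0.
by rewrite big_ord_recl /= bin0.
Qed.
Lemma size_bseq (F : fieldType) n : size (Defs.bseq F n) = n.+1.
Proof. by elim: n => //= n IH; rewrite size_rcons IH. Qed.

Lemma bseq_nth (F : fieldType) n k : (k <= n)%N -> (Defs.bseq F n)`_k = bernoulli F k.
Proof.
elim: n k => [|n IH] k; first by rewrite leqn0 => /eqP ->.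
rewrite leq_eqVlt => /orP[/eqP -> //|kn].
by rewrite /= nth_rcons size_bseq kn IH.
Qed.

Lemma bern_rec (F : fieldType) n : bernoulli F n.+1 =
  - \sum_(k < n.+1) bernoulli F k * ((n.+1)`!%:R / (k`!%:R * ((n.+1 - k).+1)`!%:R)).
Proof.
rewrite {1}/bernoulli /= nth_rcons size_bseq ltnn eqxx; congr (- _).
by apply: eq_bigr => k _; rewrite bseq_nth // -ltnS.
Qed.

Lemma autcard_cor n : autcard (corolla n) = n`!.
Proof.
rewrite /autcard size_nseq.
have := card_perm [set~ (ord0 : 'I_n.+1)]; rewrite cardsC1 card_ord /= => <-.
apply: eq_card => s; rewrite !inE.
apply/idP/idP.
  case/andP=> /eqP s0 _; rewrite unfold_in; apply/subsetP => x; rewrite !inE; apply: contra => /eqP ->.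
  by rewrite s0.
move=> hs; have s0 : s ord0 = ord0 by apply: (out_perm hs); rewrite !inE eqxx.
rewrite s0 eqxx /=; apply/forallP => v; apply/implyP => _.
rewrite !par_cor.
have -> : inord 0 = ord0 :> 'I_n.+1 by apply: val_inj; rewrite /= inordK.
by rewrite s0.
Qed.

Lemma Lf_nil (F : fieldType) f : Lf F f [::] = 1.
Proof. by case: f. Qed.

Lemma Lf_S (F : fieldType) f p : Lf F f.+1 p = (if size p == 0%N then 1 else
     - \sum_(m <- all_masks (size p) | m != nseq (size p) true)
         (\prod_(r <- kept p m) Lf F f (forest_comp p m r)) * Echar F (quot p m)).
Proof. by []. Qed.

Lemma L_cor (F : fieldType) (hF : [pchar F] =i pred0) N f :
  (N <= f)%N -> Lf F f (corolla N) = bernoulli F N.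
Proof.
have nz j : (0 < j)%N -> j%:R != 0 :> F.
  by move=> j0; rewrite ((pcharf0P F).1 hF) -lt0n.
elim/ltn_ind: N f => N IH f Nf.
case: N IH Nf => [|n] IH Nf; first by rewrite /= Lf_nil.
case: f Nf => // f nf.
rewrite Lf_S size_nseq (_ : (n.+1 == 0%N) = false) // bern_rec; congr (- _).
pose G k := if k != n.+1 then bernoulli F k * (n.+1 - k).+1%:R^-1 else 0.
transitivity (\sum_(m <- all_masks n.+1) G (count id m)).
  rewrite big_mkcond; apply: eq_big_seq => m mM.
  have sz : size m = n.+1 := @size_masks n.+1 m mM.
  have hc : (m == nseq n.+1 true) = (count id m == n.+1).
    rewrite -sz -all_count (sameP eqP (all_pred1P true m)).
    by apply: eq_all => b; case: b.
  rewrite /G hc; case: eqP => // hm.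
  have cm : cnt m n.+1 = count id m by rewrite -sz cnt_id.
  have cn : (count id m <= n)%N.
    by rewrite -ltnS ltn_neqAle (introN eqP hm) -sz count_size.
  rewrite kept_cor big_cons fc_cor0 cm IH //; last by rewrite (leq_trans cn).
  rewrite big_seq big1 ?mulr1; last first.
    move=> r rin; rewrite fc_corr ?Lf_nil //.
      by rewrite kept_cor inE rin orbT.
    by move: rin; rewrite mem_filter mem_iota; case: r.
  by rewrite quot_cor cm /Echar tfact_cor.
rewrite sum_masks big_ord_recr /= {2}/G eqxx mulr0 addr0.
apply: eq_bigr => k _; have kN : (k <= n.+1)%N by apply: ltnW.
rewrite /G (ltn_eqF (ltn_ord k)).
rewrite -(bin_fact kN) factS !natrM.
set C := 'C(_, _)%:R; set a := (k`!)%:R; set b := ((n.+1 - k)`!)%:R; set c := (n.+1 - k).+1%:R.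
have a0 : a != 0 by apply: nz; apply: fact_gt0.
have b0 : b != 0 by apply: nz; apply: fact_gt0.
have c0 : c != 0 by apply: nz.
rewrite (mulrCA a c b) invfM mulrACA divff ?mulf_neq0 // mulr1.
by rewrite mulrCA.
Qed.

Theorem mainTheorem12 (F : fieldType) (hF : [pchar F] =i pred0) (n : nat) :
  Lchar F (corolla n) = bernoulli F n /\
  Lsigma F (corolla n) = bernoulli F n / (n`!)%:R.
Proof.
have h : Lchar F (corolla n) = bernoulli F n by rewrite /Lchar size_nseq L_cor.
by split => //; rewrite /Lsigma h autcard_cor.
Qed.
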